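(* Let $(x_k)$ be a bounded sequence in a real Banach space $X$, let $x\in X$ and $c>0$, and suppose that $(x_k-x)$ generates an $\ell_1$-spreading model with constant $c$. Then $\widetilde{\operatorname{cca}}(x_{k^3})\ge 2c$, where $(x_{k^3})_{k\ge1}$ is the subsequence $x_1,x_8,x_{27},\dots$.
   Context: A bounded sequence $(y_k)$ generates an $\ell_1$-spreading model with constant $\delta>0$ if $\|\sum_{i\in F}\alpha_i y_i\|\ge\delta\sum_{i\in F}|\alpha_i|$ for every finite $F\subset\mathbb N$ with $\#F\le\min F$ and all real scalars $(\alpha_i)_{i\in F}$. $\operatorname{ca}(y_k)=\inf_{n}\sup\{\|y_k-y_l\|: k,l\ge n\}$, $\operatorname{cca}(y_k)=\operatorname{ca}(\frac1k\sum_{i=1}^k y_i)$, $\widetilde{\operatorname{cca}}(y_k)=\inf\{\operatorname{cca}(y_{k_n}) : (y_{k_n})\text{ a subsequence of }(y_k)\}$. *)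

(* Defs.v *)
(* Sequences are 1-indexed as in the paper:
   a sequence is [x : nat -> X] and only the values x k for k >= 1 are used
   (x 0 is a junk value that plays no role). *)
From HB Require Import structures.
From mathcomp Require Import all_boot all_order all_algebra.
From mathcomp Require Import all_classical all_reals all_analysis.
Set Implicit Arguments. Unset Strict Implicit. Unset Printing Implicit Defensive.
Import Order.TTheory GRing.Theory Num.Theory.
Import numFieldNormedType.Exports.
Local Open Scope classical_set_scope.
Local Open Scope ring_scope.

Section Defs.
Context {R : realType} {X : normedModType R}.

(* (y_k)_{k>=1} generates an l1-spreading model with constant delta:
   for every finite F of positive integers with #F <= min F (i.e. #F <= i for
   every i in F) and all real scalars a_i. *)
Definition l1_spreading_model (y : nat -> X) (delta : R) : Prop :=
  delta > 0 /\
  forall (F : seq nat) (a : nat -> R),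
    uniq F -> all (fun i => (0 < i)%N) F ->
    (forall i, i \in F -> (size F <= i)%N) ->
    delta * \sum_(i <- F) `|a i| <= `|\sum_(i <- F) a i *: y i|.

Definition ca (y : nat -> X) : \bar R :=
  ereal_inf [set ereal_sup [set (`|y k - y l|)%:E | k in [set k | (n <= k)%N]
                                               & l in [set l | (n <= l)%N]]
            | n in [set n | (0 < n)%N]].

Definition cesaro (y : nat -> X) : nat -> X :=
  fun k => (k%:R)^-1 *: \sum_(1 <= i < k.+1) y i.

Definition cca (y : nat -> X) : \bar R := ca (cesaro y).

Definition ccat (y : nat -> X) : \bar R :=
  ereal_inf [set cca (y \o phi) | phi in [set phi : nat -> nat | forall n, (phi n < phi n.+1)%N]].

End Defs.

(* Main.v *)
Require Import Defs.
From HB Require Import structures.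
From mathcomp Require Import all_boot all_order all_algebra.
From mathcomp Require Import all_classical all_reals all_analysis.
From mathcomp Require Import zify ring lra.
Import Order.TTheory GRing.Theory Num.Theory.
Import numFieldNormedType.Exports.
Local Open Scope classical_set_scope.
Local Open Scope ring_scope.

Definition ginv (g : nat -> nat) (p : nat) : nat :=
  find (fun i => g i == p) (iota 0 p.+1).

Lemma ginvK (g : nat -> nat) : injective g -> (forall i, (i <= g i)%N) ->
  forall i, ginv g (g i) = i.
Proof.
move=> gi gge i; rewrite /ginv.
set s := iota 0 (g i).+1.
have hs : has (fun i0 => g i0 == g i) s.
  by apply/hasP; exists i => //; rewrite mem_iota /= add0n ltnS gge.
have := nth_find 0 hs; move: hs; rewrite has_find size_iota => hs.
by rewrite nth_iota // add0n => /eqP /gi.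
Qed.

Section Core.
Context {R : realType} {X : normedModType R}.

Lemma core (y : nat -> X) (c B : R) (g : nat -> nat) (k l m : nat) :
  injective g -> (forall i, (i ^ 3 <= g i)%N) ->
  (forall p, (0 < p)%N -> `|y p| <= B) ->
  l1_spreading_model y c ->
  (1 <= m)%N -> (m <= k)%N -> (k <= l)%N -> (l.+1 - m <= m ^ 3)%N ->
  c * ((k%:R^-1 - l%:R^-1) * (k.+1 - m)%:R + l%:R^-1 * (l - k)%:R)
    - (m - 1)%:R * (k%:R^-1 * B)
  <= `|l%:R^-1 *: \sum_(1 <= i < l.+1) y (g i) - k%:R^-1 *: \sum_(1 <= i < k.+1) y (g i)|.
Proof.
move=> gi gge yB [c0 Hsp] m1 mk kl hsz.
have gge1 : forall i, (i <= g i)%N.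
  move=> i; apply: leq_trans (gge i); case: i => // i.
  by rewrite expnS leq_pmulr // expn_gt0.
have k0 : (0 < k)%N by lia.
have kr0 : 0 < k%:R :> R by rewrite ltr0n.
have lr0 : 0 < l%:R :> R by rewrite ltr0n; lia.
have klr : l%:R^-1 <= k%:R^-1 :> R by rewrite lef_pV2 ?posrE // ler_nat.
pose b i : R := l%:R^-1 - (if (i <= k)%N then k%:R^-1 else 0).
have EE : l%:R^-1 *: \sum_(1 <= i < l.+1) y (g i) - k%:R^-1 *: \sum_(1 <= i < k.+1) y (g i)
   = \sum_(1 <= i < l.+1) b i *: y (g i).
  rewrite [RHS](eq_bigr (fun i => l%:R^-1 *: y (g i) - (if (i <= k)%N then k%:R^-1 else 0) *: y (g i))); last first.
    by move=> i _; rewrite /b scalerBl.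
  rewrite sumrB -scaler_sumr; congr (_ - _).
  rewrite [RHS](big_cat_nat _ (n:=k.+1)) //=.
  rewrite [X in _ + X]big1_seq ?addr0; last first.
    move=> i /andP[_]; rewrite mem_index_iota => /andP[ki _].
    have /negbTE -> : ~~ (i <= k)%N by apply/negP; lia.
    by rewrite scale0r.
  rewrite scaler_sumr; apply: eq_big_nat => i /andP[_ ik].
  by rewrite -ltnS ik.
rewrite EE (big_cat_nat _ (n:=m)) //=; last by lia.
set P := \sum_(1 <= i < m) _.
set Q := \sum_(m <= i < l.+1) _.
have PQ : `|Q| - `|P| <= `|P + Q|.
  have h := ler_normD (P + Q) (- P); rewrite normrN (addrC P Q) addrK in h.
  by rewrite lerBlDr (addrC P Q).
apply: le_trans PQ; apply: lerB.
-
  have U : uniq [seq g i | i <- iota m (l.+1 - m)].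
    by rewrite map_inj_uniq // iota_uniq.
  have A : all (fun i => (0 < i)%N) [seq g i | i <- iota m (l.+1 - m)].
    apply/allP => p /mapP[i]; rewrite mem_iota => /andP[mi _] ->.
    apply: leq_trans (gge i); rewrite expn_gt0; lia.
  have S : forall i, i \in [seq g i | i <- iota m (l.+1 - m)] ->
      (size [seq g i | i <- iota m (l.+1 - m)] <= i)%N.
    move=> p /mapP[i]; rewrite mem_iota => /andP[mi _] ->.
    rewrite size_map size_iota; apply: leq_trans hsz _.
    apply: leq_trans (gge i); by rewrite leq_exp2r.
  have H := Hsp _ (fun p => b (ginv g p)) U A S.
  rewrite !big_map in H.
  have E1 : \sum_(j <- iota m (l.+1 - m)) b (ginv g (g j)) *: y (g j) = Q.
    by apply: eq_bigr => j _; rewrite ginvK.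
  have E2 : \sum_(j <- iota m (l.+1 - m)) `|b (ginv g (g j))| =
            \sum_(m <= i < l.+1) `|b i|.
    by apply: eq_bigr => j _; rewrite ginvK.
  rewrite E1 E2 in H; apply: le_trans H.
  apply: ler_wpM2l; first exact: ltW.
  rewrite (big_cat_nat _ (n:=k.+1)) //=; last by lia.
  have e1 : \sum_(m <= i < k.+1) `|b i| = \sum_(m <= i < k.+1) (k%:R^-1 - l%:R^-1).
    apply: eq_big_nat => i /andP[_ ik]; rewrite /b -ltnS ik.
    by rewrite distrC ger0_norm ?subr_ge0.
  have e2 : \sum_(k.+1 <= i < l.+1) `|b i| = \sum_(k.+1 <= i < l.+1) l%:R^-1.
    apply: eq_big_nat => i /andP[ki _]; rewrite /b.
    have /negbTE -> : ~~ (i <= k)%N by apply/negP; lia.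
    by rewrite subr0 ger0_norm // invr_ge0 ler0n.
  by rewrite e1 e2 !sumr_const_nat !mulr_natr subSS.
-
  apply: le_trans (ler_norm_sum _ _ _) _.
  have -> : (m-1)%:R * (k%:R^-1 * B) = \sum_(1 <= i < m) (k%:R^-1 * B).
    by rewrite sumr_const_nat mulr_natl.
  apply: ler_sum_nat => i /andP[i1 im].
  rewrite normrZ; apply: ler_pM => //.
  + rewrite /b; have -> : (i <= k)%N by lia.
    by rewrite distrC ger0_norm ?subr_ge0 // lerBlDr lerDl invr_ge0 ler0n.
  + apply: yB; apply: leq_trans (gge i); rewrite expn_gt0; lia.
Qed.
End Core.

Lemma numb (R : realType) (c B J : R) : 0 < c -> 2 <= J ->
  2 * c - (3 * c + B) / J <=
  c * (((J ^+ 3)^-1 - (J ^+ 6)^-1) * (J ^+ 3 - J ^+ 2) + (J ^+ 6)^-1 * (J ^+ 6 - J ^+ 3))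
    - J ^+ 2 * ((J ^+ 3)^-1 * B).
Proof.
move=> c0 J2.
have J0 : J != 0 by apply/negP => /eqP J0; rewrite J0 in J2; lra.
set t := J^-1.
have t0 : 0 < t by rewrite invr_gt0; lra.
have Jt : J * t = 1 by rewrite /t mulfV.
have t1 : t <= 1 by nra.
have -> : c * (((J ^+ 3)^-1 - (J ^+ 6)^-1) * (J ^+ 3 - J ^+ 2) + (J ^+ 6)^-1 * (J ^+ 6 - J ^+ 3))
    - J ^+ 2 * ((J ^+ 3)^-1 * B) = c * (2 - t - 2 * t^+3 + t^+4) - t * B.
  by rewrite /t; field.
have -> : 2 * c - (3 * c + B) / J = 2 * c - 3 * c * t - t * B by rewrite /t; field.
have h3 : t ^+ 3 <= t by rewrite !exprS expr0 mulr1; nra.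
have h4 : 0 <= t ^+ 4 by rewrite exprn_ge0 //; lra.
nra.
Qed.

Theorem lemma4p5 (R : realType) (X : completeNormedModType R)
  (x : nat -> X) (x0 : X) (c : R) :
  (exists M : R, forall k, (0 < k)%N -> `|x k| <= M) ->
  0 < c ->
  l1_spreading_model (fun k => x k - x0) c ->
  ((2 * c)%:E <= ccat (fun k => x (k ^ 3)%N))%E.
Proof.
move=> [M hM] c0 hsp.
set B := M + `|x0|.
have yB : forall p, (0 < p)%N -> `|x p - x0| <= B.
  by move=> p p0; apply: le_trans (ler_normB _ _) _; rewrite lerD2r hM.
have B0 : 0 <= B by apply: addr_ge0 => //; apply: le_trans (hM 1%N isT).
rewrite /ccat; apply/ereal_infP => _ [phi hphi <-].
have phige : forall n, (n <= phi n)%N.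
  by elim => // n ih; apply: leq_ltn_trans ih (hphi n).
have phimono : {homo phi : i j / (i < j)%N}.
  by apply: homo_ltn => //; apply: ltn_trans.
have phiinj : injective phi.
  move=> a b e; case: (ltngtP a b) => // h.
    by have := phimono _ _ h; rewrite e ltnn.
  by have := phimono _ _ h; rewrite e ltnn.
pose g := fun i => (phi i ^ 3)%N.
have ginj : injective g by move=> a b /(expIn (isT : (0 < 3)%N)) /phiinj.
have gge : forall i, (i ^ 3 <= g i)%N by move=> i; rewrite /g leq_exp2r.
have ces : forall q, (0 < q)%N ->
    Defs.cesaro ((fun k => x (k ^ 3)%N) \o phi) q =
    q%:R^-1 *: \sum_(1 <= i < q.+1) (x (g i) - x0) + x0.
  move=> q q0; rewrite /Defs.cesaro sumrB sumr_const_nat subn1 /=.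
  rewrite scalerBr -[x0 *+ q]scaler_nat scalerA mulVf ?scale1r ?subrK //.
  by rewrite pnatr_eq0 -lt0n.
rewrite /cca /ca; apply/ereal_infP => _ [n n0 <-].
apply/lee_addgt0Pr => e e0.
have := @archi_boundP R ((3 * c + B) / e) _.
move=> /(_ (divr_ge0 (addr_ge0 (mulr_ge0 (ler0n _ 3) (ltW c0)) B0) (ltW e0))).
set N := Num.Def.archi_bound _ => hN.
pose j := maxn (maxn N 2) n.
have j2 : (2 <= j)%N by rewrite /j; lia.
have jn : (n <= j)%N by rewrite /j; lia.
have jN : (N <= j)%N by rewrite /j; lia.
have := @core R X (fun p => x p - x0) c B g (j ^ 3) (j ^ 6) (j ^ 2).+1 ginj gge yB hsp.
have h1 : (1 <= (j ^ 2).+1)%N by [].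
have h2 : ((j ^ 2).+1 <= j ^ 3)%N by nia.
have h3 : (j ^ 3 <= j ^ 6)%N by nia.
have h4 : ((j ^ 6).+1 - (j ^ 2).+1 <= (j ^ 2).+1 ^ 3)%N by rewrite subSS; nia.
move=> /(_ h1 h2 h3 h4).
rewrite subSS subn1 /= !natrB ?natrX; [|nia|nia].
set J := j%:R.
set D := `|_ - _| => hD.
have J2 : 2 <= J by rewrite /J (ler_nat R 2 j).
have hnum := @numb R c B J c0 J2.
have hJ : (3 * c + B) / J <= e.
  rewrite ler_pdivrMr; last by rewrite /J ltr0n; lia.
  rewrite ltr_pdivrMr // in hN.
  have : N%:R <= J by rewrite /J ler_nat.
  nra.
apply: (@le_trans _ _ (D%:E + e%:E)).
  rewrite -EFinD lee_fin; lra.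
apply: leeD2r; apply: ereal_sup_ubound.
exists (j ^ 6)%N; first by rewrite /=; nia.
exists (j ^ 3)%N; first by rewrite /=; nia.
rewrite /D !ces ?expn_gt0; [|lia|lia].
by rewrite !natrX -/J opprD addrACA subrr addr0.
Qed.
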